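(* Let $\mathcal{A}$ be a complete deterministic timed automaton (CTA). Let $\gamma_{r1}$ and $\gamma_{r2}$ be valid reset-clocked words of $\mathcal{A}$ and let $\xi$ be a region word. If $\gamma_{r1}$ and $\gamma_{r2}$ reach the same symbolic state of $\mathcal{A}$, then for all $\gamma_{r1}'\in\mathit{vs}_{\mathcal{A}}(\gamma_{r1},\xi)$ and $\gamma_{r2}'\in\mathit{vs}_{\mathcal{A}}(\gamma_{r2},\xi)$: (1) $resets(\gamma_{r1}')=resets(\gamma_{r2}')$; (2) $\gamma_{r1}\gamma_{r1}'$ and $\gamma_{r2}\gamma_{r2}'$ reach the same symbolic state.
   Context: Let $\Sigma$ be a finite alphabet and $\mathcal{C}=\{c_1,\dots,c_m\}$ a finite set of clocks. A clock constraint is a finite conjunction of atomic constraints $c\sim k$ ($c\in\mathcal{C}$, $k\in\mathbb{N}$, ${\sim}\in\{<,\le,=,\ge,>\}$). A clock valuation is $\nu:\mathcal{C}\to\mathbb{R}_{\ge0}$ (identified with a vector in $\mathbb{R}_{\ge0}^m$); $\nu+d$ adds $d$ to all clocks, $[\mathcal{B}\to0]\nu$ resets the clocks in $\mathcal{B}$. A timed automaton is $\mathcal{A}=(\Sigma,L,l_0,F,\mathcal{C},\Delta)$ with finite location set $L$, initial $l_0$, accepting $F\subseteq L$, transitions $\Delta\subseteq L\times\Sigma\times\Phi(\mathcal{C})\times2^{\mathcal{C}}\times L$. A run over a delay-timed word $(\sigma_1,t_1)\cdots(\sigma_n,t_n)$ is $(l_0,\nu_0)\xrightarrow{t_1,\sigma_1}\cdots\xrightarrow{t_n,\sigma_n}(l_n,\nu_n)$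 with $\nu_0\equiv0$ and transitions $(l_{i-1},\sigma_i,\phi_i,\mathcal{B}_i,l_i)\in\Delta$ such that $\nu_{i-1}+t_i$ satisfies $\phi_i$ and $\nu_i=[\mathcal{B}_i\to0](\nu_{i-1}+t_i)$. $\mathcal{A}$ is a CTA if every delay-timed word has exactly one run. The reset-clocked word of the run is $(\sigma_1,\mathbf{v}_1,\mathbf{b}_1)\cdots(\sigma_n,\mathbf{v}_n,\mathbf{b}_n)$ with $\mathbf{v}_i=\nu_{i-1}+t_i$ and $\mathbf{b}_{i,j}=\top$ iff $c_j\in\mathcal{B}_i$ (else $\bot$); $resets(\cdot)$ returns the sequence $\mathbf{b}_1,\dots,\mathbf{b}_n$ and $vw(\cdot)$ drops the reset components. A reset-clocked word is valid for $\mathcal{A}$ if it is the reset-clocked word of some run, and it then reaches the symbolic state $(l_n,\llbracket\nu_n\rrbracket)$ of that run. Regions: with $\kappa(c)$ the largest integer in guards of $\mathcal{A}$ over $c$, valuations $\nu,\nu'$ are region-equivalent iff (i) for all $c$, $\lfloor\nu(c)\rfloor=\lfloor\nu'(c)\rfloor$ or both exceed $\kappa(c)$; (ii) for all $c$ with $\nu(c)\le\kappa(c)$, $\mathrm{frac}(\nu(c))=0$ iff $\mathrm{frac}(\nu'(c))=0$; (iii) for $c_i,c_j$ with $\nu(c_i)\le\kappa(c_i),\nu(c_j)\le\kappa(c_j)$, $\mathrm{frac}(\nu(c_i))\le\mathrm{frac}(\nu(c_j))$ iff $\mathrm{frac}(\nu'(c_i))\le\mathrm{frac}(\nu'(c_j))$;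 $\llbracket\nu\rrbracket$ is the region of $\nu$ and a symbolic state is a pair (location, region). A region word is a finite sequence of pairs $(\sigma,R)$, $\sigma\in\Sigma$, $R$ a region; a clocked word $(\sigma_1,\mathbf{v}_1)\cdots(\sigma_n,\mathbf{v}_n)$ has region word $\llbracket\cdot\rrbracket=(\sigma_1,\llbracket\mathbf{v}_1\rrbracket)\cdots(\sigma_n,\llbracket\mathbf{v}_n\rrbracket)$. $\mathit{vs}_{\mathcal{A}}(\gamma_r,\xi)$ is the set of reset-clocked words $\gamma_r'$ with $\llbracket vw(\gamma_r')\rrbracket=\xi$ such that $\gamma_r\gamma_r'$ is a valid reset-clocked word of $\mathcal{A}$. *)

(* Defs.v *)
From Stdlib Require Import Reals.
From Stdlib Require List.
From mathcomp Require Import all_boot.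
Set Implicit Arguments. Unset Strict Implicit. Unset Printing Implicit Defensive.

Local Open Scope R_scope.

Definition valuation (m : nat) := 'I_m -> R.

Definition nonneg m (v : valuation m) : Prop := forall c, 0 <= v c.

Definition vzero m : valuation m := fun _ => 0.
Definition vdelay m (v : valuation m) (d : R) : valuation m := fun c => v c + d.
Definition vreset m (B : {set 'I_m}) (v : valuation m) : valuation m :=
  fun c => if c \in B then 0 else v c.

Inductive cmp := CLt | CLe | CEq | CGe | CGt.
Definition atomic (m : nat) := ('I_m * cmp * nat)%type.
Definition guard (m : nat) := seq (atomic m).

Definition sat_atomic m (v : valuation m) (a : atomic m) : Prop :=
  let: (c, op, k) := a in
  match op with
  | CLt => v c < INR k
  | CLe => v c <= INR k
  | CEq => v c = INR k
  | CGe => v c >= INR k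
  | CGt => v c > INR k
  end.

Definition sat m (v : valuation m) (phi : guard m) : Prop :=
  forall a, List.In a phi -> sat_atomic v a.

Definition transition (Sigma L : Type) (m : nat) :=
  (L * Sigma * guard m * {set 'I_m} * L)%type.

Record TA (Sigma L : finType) (m : nat) := {
  ta_l0 : L;
  ta_F : {set L};
  ta_delta : seq (transition Sigma L m)
}.

Definition config (L : Type) (m : nat) := (L * valuation m)%type.

(* Reset-clocked letter (sigma, v, b); b is the set of reset clocks, i.e.
   b_j = true iff c_j \in b. *)
Definition rcletter (Sigma : Type) (m : nat) := (Sigma * valuation m * {set 'I_m})%type.

Inductive run_from (Sigma L : finType) (m : nat) (A : TA Sigma L m) :
  config L m -> seq (Sigma * R) -> seq (transition Sigma L m) ->
  seq (rcletter Sigma m) -> config L m -> Prop :=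
| run_nil c : run_from A c [::] [::] [::] c
| run_cons l v sigma t w phi B l' trs gr c :
    List.In (l, sigma, phi, B, l') (ta_delta A) ->
    0 <= t ->
    sat (vdelay v t) phi ->
    run_from A (l', vreset B (vdelay v t)) w trs gr c ->
    run_from A (l, v) ((sigma, t) :: w) ((l, sigma, phi, B, l') :: trs)
             ((sigma, vdelay v t, B) :: gr) c.

Definition init_config Sigma L m (A : TA Sigma L m) : config L m :=
  (ta_l0 A, @vzero m).

Definition is_run Sigma L m (A : TA Sigma L m) (w : seq (Sigma * R))
  (trs : seq (transition Sigma L m)) : Prop :=
  exists gr c, run_from A (init_config A) w trs gr c.

Definition is_CTA Sigma L m (A : TA Sigma L m) : Prop :=
  forall w : seq (Sigma * R), (forall p, List.In p w -> 0 <= snd p) ->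
    exists! trs, is_run A w trs.

Definition reaches Sigma L m (A : TA Sigma L m) (gr : seq (rcletter Sigma m))
  (l : L) (v : valuation m) : Prop :=
  exists w trs, run_from A (init_config A) w trs gr (l, v).

Definition valid Sigma L m (A : TA Sigma L m) (gr : seq (rcletter Sigma m)) : Prop :=
  exists l v, reaches A gr l v.

Definition kappa Sigma L m (A : TA Sigma L m) (c : 'I_m) : nat :=
  foldr maxn 0%N
    [seq (let: (c', _, k) := a in if c' == c then k else 0%N)
       | a <- flatten [seq (let: (_, _, phi, _, _) := tr in phi) | tr <- ta_delta A]].

(* floor and fractional part (Stdlib: Int_part r = up r - 1 = floor r). *)
Definition rfloor (r : R) : Z := Int_part r.
Definition rfrac (r : R) : R := frac_part r.

Definition region_equiv Sigma L m (A : TA Sigma L m) (v v' : valuation m) : Prop :=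
  (forall c, rfloor (v c) = rfloor (v' c) \/
             (v c > INR (kappa A c) /\ v' c > INR (kappa A c))) /\
  (forall c, v c <= INR (kappa A c) -> (rfrac (v c) = 0 <-> rfrac (v' c) = 0)) /\
  (forall ci cj, v ci <= INR (kappa A ci) -> v cj <= INR (kappa A cj) ->
     (rfrac (v ci) <= rfrac (v cj) <-> rfrac (v' ci) <= rfrac (v' cj))).

Definition region Sigma L m (A : TA Sigma L m) (v : valuation m) : valuation m -> Prop :=
  fun v' => nonneg v' /\ region_equiv A v v'.

Definition is_region Sigma L m (A : TA Sigma L m) (Rg : valuation m -> Prop) : Prop :=
  exists v, nonneg v /\ Rg = region A v.

Definition region_word (Sigma : Type) (m : nat) := seq (Sigma * (valuation m -> Prop)).

Definition is_region_word Sigma L m (A : TA Sigma L m) (xi : region_word Sigma m) : Prop :=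
  forall p, List.In p xi -> is_region A (snd p).

Definition resets Sigma m (gr : seq (rcletter Sigma m)) : seq {set 'I_m} :=
  [seq x.2 | x <- gr].
Definition vw Sigma m (gr : seq (rcletter Sigma m)) : seq (Sigma * valuation m) :=
  [seq x.1 | x <- gr].

Definition region_of_word Sigma L m (A : TA Sigma L m)
  (cw : seq (Sigma * valuation m)) : region_word Sigma m :=
  [seq (x.1, region A x.2) | x <- cw].

Definition vs Sigma L m (A : TA Sigma L m) (gr : seq (rcletter Sigma m))
  (xi : region_word Sigma m) (gr' : seq (rcletter Sigma m)) : Prop :=
  region_of_word A (vw gr') = xi /\ valid A (gr ++ gr').

Definition same_symbolic_state Sigma L m (A : TA Sigma L m)
  (gr1 gr2 : seq (rcletter Sigma m)) : Prop :=
  exists l v1 v2, reaches A gr1 l v1 /\ reaches A gr2 l v2 /\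
                  region A v1 = region A v2.

(* Main.v *)
Require Import Defs.
From mathcomp Require Import all_boot.
From Stdlib Require Import Reals Lra Lia ZArith FunctionalExtensionality PropExtensionality.
Set Implicit Arguments. Unset Strict Implicit.
Local Open Scope R_scope.

Lemma fl_spec r : IZR (rfloor r) <= r < IZR (rfloor r) + 1.
Proof. unfold rfloor. destruct (base_Int_part r). lra. Qed.

Lemma fl_unique (n : Z) r : IZR n <= r < IZR n + 1 -> rfloor r = n.
Proof.
  intros [H1 H2]. destruct (fl_spec r) as [H3 H4].
  assert (A1: (n < rfloor r + 1)%Z) by (apply lt_IZR; rewrite plus_IZR; lra).
  assert (A2: (rfloor r < n + 1)%Z) by (apply lt_IZR; rewrite plus_IZR; lra).
  lia.
Qed.

Lemma frac_eq r : rfrac r = r - IZR (rfloor r).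
Proof. reflexivity. Qed.

Lemma frac_ge0 r : 0 <= rfrac r.
Proof. unfold rfrac. destruct (base_fp r). lra. Qed.

Lemma frac_zero0 : rfrac 0 = 0.
Proof. rewrite frac_eq (@fl_unique 0%Z 0); [simpl; lra| simpl; lra]. Qed.

Lemma open_cell (n z : Z) X : IZR n < X < IZR n + 1 ->
  (X < IZR z <-> (n < z)%Z) /\ X <> IZR z.
Proof.
  intros [H1 H2]. split; [split|].
  - intro H. apply lt_IZR. lra.
  - intro H. assert (IZR (n+1) <= IZR z) by (apply IZR_le; lia).
    rewrite plus_IZR in H0. lra.
  - intro H. assert (n < z)%Z by (apply lt_IZR; lra).
    assert (z < n + 1)%Z by (apply lt_IZR; rewrite plus_IZR; lra). lia.
Qed.

Lemma same_cell X Y : rfloor X = rfloor Y -> (rfrac X = 0 <-> rfrac Y = 0) ->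
  forall z, (X < IZR z <-> Y < IZR z) /\ (X = IZR z <-> Y = IZR z).
Proof.
  intros Hf Hz z. rewrite !frac_eq in Hz.
  destruct (fl_spec X) as [a1 a2]; destruct (fl_spec Y) as [b1 b2].
  rewrite Hf in a1 a2 Hz.
  destruct (Req_dec (X - IZR (rfloor Y)) 0) as [E|E].
  - assert (Y - IZR (rfloor Y) = 0) by (apply Hz; exact E).
    assert (X = Y) by lra. subst. tauto.
  - assert (Y - IZR (rfloor Y) <> 0) by (intro; apply E; apply Hz; auto).
    destruct (@open_cell (rfloor Y) z X) as [[c1 c2] c3]; [lra|].
    destruct (@open_cell (rfloor Y) z Y) as [[d1 d2] d3]; [lra|].
    split; split; intro H1.
    + apply d2, c1, H1.
    + apply c2, d1, H1.
    + exfalso; apply c3; exact H1.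
    + exfalso; apply d3; exact H1.
Qed.

Lemma bt (Sigma L : finType) (m : nat) (A : TA Sigma L m) u v c :
  region_equiv A u v -> u c <= INR (kappa A c) -> v c <= INR (kappa A c).
Proof.
  intros [H1 [H2 _]] Hu. destruct (H1 c) as [Hf|[Hx _]]; [|lra].
  destruct (Rle_or_lt (v c) (INR (kappa A c))) as [ok|Hv]; [exact ok|exfalso].
  pose proof Hu as Hu0.
  rewrite INR_IZR_INZ in Hu Hv.
  destruct (fl_spec (u c)) as [a1 a2]; destruct (fl_spec (v c)) as [b1 b2].
  rewrite Hf in a1 a2.
  assert (A1: (rfloor (v c) <= Z.of_nat (kappa A c))%Z) by (apply le_IZR; lra).
  assert (A2: (Z.of_nat (kappa A c) < rfloor (v c) + 1)%Z) by (apply lt_IZR; rewrite plus_IZR; lra).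
  assert (E: IZR (rfloor (v c)) = IZR (Z.of_nat (kappa A c))) by (f_equal; lia).
  assert (Fu: rfrac (u c) = 0) by (rewrite frac_eq Hf; lra).
  apply (H2 c Hu0) in Fu. rewrite frac_eq in Fu. lra.
Qed.

Lemma key1 (Sigma L : finType) (m : nat) (A : TA Sigma L m) x y c :
  region_equiv A x y -> x c <= INR (kappa A c) ->
  forall z, (x c < IZR z <-> y c < IZR z) /\ (x c = IZR z <-> y c = IZR z).
Proof.
  intros [H1 [H2 _]] Hx. apply same_cell.
  - destruct (H1 c) as [Hf|[Hc _]]; [exact Hf|lra].
  - apply H2; exact Hx.
Qed.

Lemma key2 (Sigma L : finType) (m : nat) (A : TA Sigma L m) x y c k :
  region_equiv A x y -> region_equiv A y x -> (k <= kappa A c)%coq_nat ->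
  (x c < INR k <-> y c < INR k) /\ (x c = INR k <-> y c = INR k).
Proof.
  intros Hxy Hyx Hk. rewrite INR_IZR_INZ.
  destruct (Rle_or_lt (x c) (INR (kappa A c))) as [Hx|Hx].
  - apply key1 with (A := A); auto.
  - destruct (Rle_or_lt (y c) (INR (kappa A c))) as [Hy|Hy].
    + destruct (key1 Hyx Hy (Z.of_nat k)). tauto.
    + apply le_INR in Hk. rewrite <- INR_IZR_INZ. lra.
Qed.

Lemma cmp_transfer X Y k op :
  (X < k <-> Y < k) -> (X = k <-> Y = k) ->
  match op with
  | CLt => X < k | CLe => X <= k | CEq => X = k | CGe => X >= k | CGt => X > k end ->
  match op with
  | CLt => Y < k | CLe => Y <= k | CEq => Y = k | CGe => Y >= k | CGt => Y > k end.
Proof.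
  intros H1 H2.
  assert (HH: (X<k /\ Y<k) \/ (X=k /\ Y=k) \/ (X>k /\ Y>k)).
  { destruct (Rtotal_order X k) as [a|[a|a]].
    - left; split; [exact a| apply H1, a].
    - right; left; split; [exact a| apply H2, a].
    - right; right; split; [exact a|].
      destruct (Rtotal_order Y k) as [b|[b|b]]; auto.
      + apply H1 in b; lra.
      + apply H2 in b; lra. }
  destruct op; destruct HH as [[]|[[]|[]]]; lra.
Qed.

Lemma in_cat_iff (T : Type) (a : T) (s1 s2 : seq T) :
  List.In a (s1 ++ s2) <-> List.In a s1 \/ List.In a s2.
Proof.
  induction s1 as [|x s1 IH]; simpl; [tauto|]. rewrite IH. tauto.
Qed.

Lemma in_foldr_max (T : Type) (f : T -> nat) (a : T) (s : seq T) :
  List.In a s -> leq (f a) (foldr maxn 0%N (map f s)).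
Proof.
  induction s as [|x s IH]; simpl; [tauto|].
  intros [E|H].
  - subst. apply leq_maxl.
  - apply (leq_trans (IH H)). apply leq_maxr.
Qed.

Lemma in_flatten_map (T U : Type) (g : T -> seq U) (a : U) (x : T) (s : seq T) :
  List.In x s -> List.In a (g x) -> List.In a (flatten (map g s)).
Proof.
  induction s as [|y s IH]; simpl; [tauto|].
  intros [E|H] Ha; apply in_cat_iff; [subst; left; exact Ha| right; auto].
Qed.

Lemma kappa_bound (Sigma L : finType) (m : nat) (A : TA Sigma L m) l s phi B l' c op k :
  List.In (l, s, phi, B, l') (ta_delta A) -> List.In (c, op, k) phi ->
  (k <= kappa A c)%coq_nat.
Proof.
  intros Hd Hp. apply/leP.
  unfold kappa.
  set f := (fun a : atomic m => let: (c', _, k0) := a in if c' == c then k0 else 0%N).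
  have -> : k = f (c, op, k) by rewrite /f eqxx.
  apply in_foldr_max.
  eapply in_flatten_map; [exact Hd|exact Hp].
Qed.

Lemma sat_transfer (Sigma L : finType) (m : nat) (A : TA Sigma L m) l s phi B l' x y :
  List.In (l, s, phi, B, l') (ta_delta A) ->
  region_equiv A x y -> region_equiv A y x -> sat x phi -> sat y phi.
Proof.
  intros Hd Hxy Hyx Hs a Ha. specialize (Hs a Ha).
  destruct a as [[c op] k].
  destruct (key2 Hxy Hyx (kappa_bound Hd Ha)) as [H1 H2].
  simpl in *. exact (cmp_transfer H1 H2 Hs).
Qed.

Definition PU (Sigma L : finType) (m : nat) (A : TA Sigma L m) (u v : valuation m) :=
  forall c, u c > INR (kappa A c) -> v c > INR (kappa A c) ->
    v c < INR (kappa A c) + 1 -> u c < INR (kappa A c) + 1.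

Lemma req_refl (Sigma L : finType) (m : nat) (A : TA Sigma L m) x : region_equiv A x x.
Proof. split; [|split]; intros; [left; reflexivity|tauto|tauto]. Qed.

Lemma reset_equiv (Sigma L : finType) (m : nat) (A : TA Sigma L m) B u v :
  region_equiv A u v -> region_equiv A (vreset B u) (vreset B v).
Proof.
  intros [H1 [H2 H3]]. unfold vreset. split; [|split].
  - intro c. destruct (c \in B); [left; reflexivity| apply H1].
  - intro c. destruct (c \in B); [tauto| apply H2].
  - intros ci cj. pose proof (frac_ge0 (u ci)). pose proof (frac_ge0 (v ci)).
    pose proof (frac_ge0 (u cj)). pose proof (frac_ge0 (v cj)).
    destruct (ci \in B); destruct (cj \in B); rewrite ?frac_zero0.
    + tauto.
    + intros. lra.
    + intros Hi _. pose proof (H2 ci Hi). split; intro; [|]; lra.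
    + apply H3.
Qed.

Lemma reset_PU (Sigma L : finType) (m : nat) (A : TA Sigma L m) B u v :
  PU A u v -> PU A (vreset B u) (vreset B v).
Proof.
  intros H c. unfold vreset. pose proof (pos_INR (kappa A c)).
  destruct (c \in B); [lra|apply H].
Qed.

Lemma req_trans (Sigma L : finType) (m : nat) (A : TA Sigma L m) u v w :
  region_equiv A u v -> region_equiv A v w -> PU A u v -> region_equiv A u w.
Proof.
  intros Huv Hvw HP. pose proof Huv as [U1 [U2 U3]]. pose proof Hvw as [V1 [V2 V3]].
  split; [|split].
  - intro c. pose proof (HP c) as Pc.
    destruct (Rle_or_lt (u c) (INR (kappa A c))) as [Hu|Hu].
    + pose proof (bt Huv Hu) as Hv.
      destruct (U1 c) as [E1|[]]; [|lra].
      destruct (V1 c) as [E2|[]]; [|lra]. left; congruence.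
    + destruct (Rle_or_lt (w c) (INR (kappa A c))) as [Hw|Hw]; [|right; lra].
      left.
      destruct (V1 c) as [E2|[]]; [|lra].
      destruct (U1 c) as [E1|[_ Hv]].
      * congruence.
      * rewrite INR_IZR_INZ in Hu Hv Hw Pc.
        destruct (fl_spec (v c)) as [a1 a2]; destruct (fl_spec (w c)) as [b1 b2].
        rewrite E2 in a1 a2.
        assert (A1: (rfloor (w c) <= Z.of_nat (kappa A c))%Z) by (apply le_IZR; lra).
        assert (A2: (Z.of_nat (kappa A c) < rfloor (w c) + 1)%Z) by (apply lt_IZR; rewrite plus_IZR; lra).
        assert (E: rfloor (w c) = Z.of_nat (kappa A c)) by lia.
        rewrite E in a2. specialize (Pc Hu Hv a2).
        rewrite E. apply fl_unique. lra.
  - intros c Hu. pose proof (bt Huv Hu) as Hv.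
    rewrite (U2 c Hu). apply V2, Hv.
  - intros ci cj Hi Hj. rewrite (U3 ci cj Hi Hj). apply V3; eapply bt; eauto.
Qed.

Lemma region_eq_intro (Sigma L : finType) (m : nat) (A : TA Sigma L m) x y :
  region_equiv A x y -> region_equiv A y x -> PU A x y -> PU A y x ->
  region A x = region A y.
Proof.
  intros H1 H2 P1 P2. apply functional_extensionality; intro z.
  apply propositional_extensionality. unfold region. split; intros [Hn Hz]; split; auto.
  - eapply req_trans; eauto.
  - eapply req_trans; eauto.
Qed.

Lemma region_mem (Sigma L : finType) (m : nat) (A : TA Sigma L m) x y z :
  region A x = region A y -> region A x z -> region_equiv A y z.
Proof. intros E H. rewrite E in H. apply H. Qed.

Lemma region_eq_PU (Sigma L : finType) (m : nat) (A : TA Sigma L m) x y :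
  Defs.nonneg x -> region A x = region A y -> PU A y x.
Proof.
  intros Hn E c Hy Hx Hx1.
  set z := fun c' => if c' == c then INR (kappa A c) else x c'.
  assert (Hz : region A x z).
  { split.
    - intro c'. unfold z. destruct (c' == c); [apply pos_INR|apply Hn].
    - split; [|split].
      + intro c'. unfold z. destruct (c' == c) eqn:E'; [|left; reflexivity].
        move/eqP: E' => ->. left. rewrite INR_IZR_INZ. rewrite INR_IZR_INZ in Hx Hx1.
        rewrite (@fl_unique (Z.of_nat (kappa A c)) (x c)); [|lra].
        rewrite (@fl_unique (Z.of_nat (kappa A c))); [reflexivity|lra].
      + intros c' H. unfold z. destruct (c' == c) eqn:E'; [|tauto].
        move/eqP: E' => E'. subst. lra.
      + intros ci cj Hi Hj. unfold z.
        destruct (ci == c) eqn:Ei; [move/eqP: Ei => Ei; subst; lra|].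
        destruct (cj == c) eqn:Ej; [move/eqP: Ej => Ej; subst; lra|]. tauto. }
  pose proof (region_mem E Hz) as [H1 _].
  destruct (H1 c) as [F|[_ F]]; unfold z in F; rewrite eqxx in F; [|lra].
  rewrite INR_IZR_INZ in F |- *.
  rewrite (@fl_unique (Z.of_nat (kappa A c)) (IZR (Z.of_nat (kappa A c)))) in F; [|lra].
  destruct (fl_spec (y c)) as [_ H0]. rewrite F in H0. lra.
Qed.

Lemma region_eq_reset (Sigma L : finType) (m : nat) (A : TA Sigma L m) B x y :
  Defs.nonneg x -> Defs.nonneg y -> region A x = region A y ->
  region A (vreset B x) = region A (vreset B y).
Proof.
  intros Hx Hy E.
  assert (Rxy : region_equiv A x y).
  { apply (region_mem (esym E)). split; [exact Hy| apply req_refl]. }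
  assert (Ryx : region_equiv A y x).
  { apply (region_mem E). split; [exact Hx| apply req_refl]. }
  apply region_eq_intro; try apply reset_equiv; auto; apply reset_PU.
  - apply (region_eq_PU Hy (esym E)).
  - apply (region_eq_PU Hx E).
Qed.

Definition reachable (Sigma L : finType) (m : nat) (A : TA Sigma L m) (c : config L m) :=
  exists w trs gr, run_from A (init_config A) w trs gr c.

Lemma run_app (Sigma L : finType) (m : nat) (A : TA Sigma L m) c w1 t1 g1 c' :
  run_from A c w1 t1 g1 c' -> forall w2 t2 g2 c'', run_from A c' w2 t2 g2 c'' ->
  run_from A c (w1 ++ w2) (t1 ++ t2) (g1 ++ g2) c''.
Proof.
  induction 1; intros; simpl; [assumption|].
  econstructor; eauto.
Qed.

Lemma run_split (Sigma L : finType) (m : nat) (A : TA Sigma L m) g1 g2 :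
  forall c w trs c'', run_from A c w trs (g1 ++ g2) c'' ->
  exists w1 w2 t1 t2 c', run_from A c w1 t1 g1 c' /\ run_from A c' w2 t2 g2 c''.
Proof.
  induction g1 as [|a g1 IH]; intros c w trs c'' H.
  - exists [::], w, [::], trs, c. split; [constructor|exact H].
  - simpl in H. inversion H; subst.
    match goal with [Hr : run_from A _ _ _ (g1 ++ g2) _ |- _] =>
      destruct (IH _ _ _ _ Hr) as (w1 & w2 & t1 & t2 & c' & R1 & R2) end.
    exists ((sigma, t) :: w1), w2, ((l, sigma, phi, B, l') :: t1), t2, c'.
    split; [econstructor; eauto| exact R2].
Qed.

Lemma run_delays (Sigma L : finType) (m : nat) (A : TA Sigma L m) c w trs g c' :
  run_from A c w trs g c' -> forall p, List.In p w -> 0 <= snd p.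
Proof.
  induction 1; simpl; [tauto|]. intros p [E|H']; [subst; simpl; lra| auto].
Qed.

Lemma run_nonneg (Sigma L : finType) (m : nat) (A : TA Sigma L m) c w trs g c' :
  run_from A c w trs g c' -> Defs.nonneg (snd c) -> Defs.nonneg (snd c').
Proof.
  induction 1; simpl; [tauto|]. intros Hn. apply IHrun_from. simpl.
  intro c0. unfold vreset, vdelay. destruct (c0 \in B); [lra|].
  specialize (Hn c0). lra.
Qed.

Lemma reach_nonneg (Sigma L : finType) (m : nat) (A : TA Sigma L m) l v :
  reachable A (l, v) -> Defs.nonneg v.
Proof.
  intros (w & trs & gr & H). apply (run_nonneg H). intro c; simpl; unfold vzero; lra.
Qed.

Lemma reach_step (Sigma L : finType) (m : nat) (A : TA Sigma L m) l v s t phi B l' :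
  reachable A (l, v) -> List.In (l, s, phi, B, l') (ta_delta A) -> 0 <= t ->
  sat (vdelay v t) phi -> reachable A (l', vreset B (vdelay v t)).
Proof.
  intros (w & trs & gr & H) Hd Ht Hs.
  exists (w ++ [:: (s, t)]), (trs ++ [:: (l, s, phi, B, l')]),
    (gr ++ [:: (s, vdelay v t, B)]).
  apply (run_app H). econstructor; eauto. constructor.
Qed.

Lemma rcons_cancel (T : Type) (s : seq T) a b : s ++ [:: a] = s ++ [:: b] -> a = b.
Proof.
  induction s as [|x s IH]; simpl; intro H; [congruence|]. injection H; auto.
Qed.

Lemma uniq_step (Sigma L : finType) (m : nat) (A : TA Sigma L m) l v s t
    phi1 B1 l1 phi2 B2 l2 :
  is_CTA A -> reachable A (l, v) ->
  List.In (l, s, phi1, B1, l1) (ta_delta A) -> List.In (l, s, phi2, B2, l2) (ta_delta A) ->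
  0 <= t -> sat (vdelay v t) phi1 -> sat (vdelay v t) phi2 ->
  (l, s, phi1, B1, l1) = (l, s, phi2, B2, l2).
Proof.
  intros HC (w & trs & gr & H) Hd1 Hd2 Ht Hs1 Hs2.
  assert (Hnn : forall p, List.In p (w ++ [:: (s, t)]) -> 0 <= snd p).
  { intros p Hp. apply in_cat_iff in Hp. destruct Hp as [Hp|[E|[]]].
    - exact (run_delays H Hp).
    - subst; simpl; lra. }
  destruct (HC _ Hnn) as [x [_ Hu]].
  assert (E1 : x = trs ++ [:: (l, s, phi1, B1, l1)]).
  { apply Hu. eexists; eexists. apply (run_app H). econstructor; eauto. constructor. }
  assert (E2 : x = trs ++ [:: (l, s, phi2, B2, l2)]).
  { apply Hu. eexists; eexists. apply (run_app H). econstructor; eauto. constructor. }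
  rewrite E1 in E2. exact (rcons_cancel E2).
Qed.

Lemma run_det (Sigma L : finType) (m : nat) (A : TA Sigma L m) c w trs g c1 :
  is_CTA A -> run_from A c w trs g c1 -> reachable A c ->
  forall w' trs' c2, run_from A c w' trs' g c2 -> c1 = c2.
Proof.
  intros HC. induction 1 as [c|l v sigma t w phi B l' trs gr c1 Hd Ht Hs Hr IH];
    intros Hre w' trs' c2 H2.
  - inversion H2; subst. reflexivity.
  - inversion H2; subst.
    match goal with
    | [ E : vdelay v ?t0 = vdelay v t, Hd2 : List.In _ (ta_delta A),
        Hs2 : sat (vdelay v ?t0) _, Hr2 : run_from A _ _ _ gr _ |- _ ] =>
      rewrite E in Hs2; rewrite E in Hr2;
      pose proof (uniq_step HC Hre Hd Hd2 Ht Hs Hs2) as E';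
      injection E'; intros; subst;
      eapply IH; [eapply reach_step; eauto| exact Hr2]
    end.
Qed.

Lemma main_run (Sigma L : finType) (m : nat) (A : TA Sigma L m) c1 w1 trs1 g1 c1f :
  is_CTA A -> run_from A c1 w1 trs1 g1 c1f ->
  forall c2 w2 trs2 g2 c2f, run_from A c2 w2 trs2 g2 c2f ->
  reachable A c1 -> reachable A c2 -> fst c1 = fst c2 -> region A (snd c1) = region A (snd c2) ->
  region_of_word A (vw g1) = region_of_word A (vw g2) ->
  resets g1 = resets g2 /\ fst c1f = fst c2f /\ region A (snd c1f) = region A (snd c2f).
Proof.
  intros HC. induction 1 as [c|l v sigma t w phi B l' trs gr c1 Hd Ht Hs Hr IH];
    intros c2 w2 trs2 g2 c2f H2 Hre1 Hre2 El Er Ew.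
  - destruct H2 as [c0|]; [|discriminate Ew]. simpl. auto.
  - destruct H2 as [c0|l2 v2 sigma2 t2 w2 phi2 B2 l2' trs2 gr2 c2f Hd2 Ht2 Hs2 Hr2];
      [discriminate Ew|].
    simpl in El, Er. subst l2.
    change ((sigma, region A (vdelay v t)) :: region_of_word A (vw gr) =
            (sigma2, region A (vdelay v2 t2)) :: region_of_word A (vw gr2)) in Ew.
    injection Ew as Es Ert Ew'. subst sigma2.
    pose proof (reach_nonneg Hre1) as N1. pose proof (reach_nonneg Hre2) as N2.
    assert (Nd1 : Defs.nonneg (vdelay v t)) by (intro c0; unfold vdelay; specialize (N1 c0); lra).
    assert (Nd2 : Defs.nonneg (vdelay v2 t2)) by (intro c0; unfold vdelay; specialize (N2 c0); lra).
    assert (Rxy : region_equiv A (vdelay v t) (vdelay v2 t2)).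
    { apply (region_mem (esym Ert)). split; [exact Nd2| apply req_refl]. }
    assert (Ryx : region_equiv A (vdelay v2 t2) (vdelay v t)).
    { apply (region_mem Ert). split; [exact Nd1| apply req_refl]. }
    pose proof (sat_transfer Hd Rxy Ryx Hs) as Hs'.
    pose proof (uniq_step HC Hre2 Hd Hd2 Ht2 Hs' Hs2) as E.
    injection E; intros; subst.
    destruct (IH _ _ _ _ _ Hr2) as [IH1 IH2].
    + eapply reach_step; eauto.
    + eapply reach_step; eauto.
    + reflexivity.
    + simpl. apply region_eq_reset; auto.
    + exact Ew'.
    + simpl. rewrite IH1. auto.
Qed.

Unset Implicit Arguments.
Local Close Scope R_scope.

Theorem lemma3p6 (Sigma L : finType) (m : nat) (A : TA Sigma L m)
  (gr1 gr2 : seq (rcletter Sigma m)) (xi : region_word Sigma m) :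
  is_CTA A -> valid A gr1 -> valid A gr2 -> is_region_word A xi ->
  same_symbolic_state A gr1 gr2 ->
  forall gr1' gr2', vs A gr1 xi gr1' -> vs A gr2 xi gr2' ->
    resets gr1' = resets gr2' /\ same_symbolic_state A (gr1 ++ gr1') (gr2 ++ gr2').
Proof.
  intros HC _ _ _ (l & v1 & v2 & (wa & ta & Ra) & (wb & tb & Rb) & Er)
    gr1' gr2' [X1 (l1 & u1 & wc & tc & Rc)] [X2 (l2 & u2 & wd & td & Rd)].
  destruct (run_split Rc) as (w1 & w1' & t1 & t1' & c1 & S1 & S1').
  destruct (run_split Rd) as (w2 & w2' & t2 & t2' & c2 & S2 & S2').
  assert (Hi : reachable A (init_config A)) by (exists [::], [::], [::]; constructor).
  pose proof (run_det HC Ra Hi S1) as E1. pose proof (run_det HC Rb Hi S2) as E2.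
  subst c1 c2.
  assert (Hr1 : reachable A (l, v1)) by (exists wa, ta, gr1; exact Ra).
  assert (Hr2 : reachable A (l, v2)) by (exists wb, tb, gr2; exact Rb).
  destruct (main_run HC S1' S2' Hr1 Hr2 erefl Er (etrans X1 (esym X2))) as (R1 & R2 & R3).
  simpl in R2, R3. subst l2.
  split; [exact R1|].
  exists l1, u1, u2. split; [|split]; [exists wc, tc; exact Rc|exists wd, td; exact Rd|exact R3].
Qed.
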